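(* Let $p\in(0,1]$ and let $q\ge1$ be an integer. Then $\gamma_\infty^*\ge\big(1-(1-p)^q\big)\gamma_{\infty,q}^*$.
   Context: For an integer $q\ge1$, $\gamma_{\infty,q}^*$ is the optimal value (supremum) of $(CLP)_{p,q}$: maximize $\gamma$ over $\gamma\ge0$ and measurable $\alpha:[0,1]\times\{1,2,\dots\}\to[0,1]$ subject to $t\,\alpha(t,s)\le1-p\int_0^t\sum_{\sigma\ge1}\alpha(\tau,\sigma)\,d\tau$ for all $t\in[0,1],s\ge1$, and $\gamma\le\frac{p}{1-(1-p)^k}\int_0^1\sum_{s\ge1}\alpha(t,s)\sum_{\ell=s}^k\binom{\ell-1}{s-1}t^s(1-t)^{\ell-s}\,dt$ for all $k\in[q]$. $\gamma_\infty^*$ is the optimal value of the same program with the second family of constraints imposed for all $k\ge1$. *)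

(* Defs.v *)
From HB Require Import structures.
From mathcomp Require Import all_boot all_order all_algebra.
From mathcomp Require Import all_classical all_reals all_analysis.
Set Implicit Arguments. Unset Strict Implicit. Unset Printing Implicit Defensive.
Import Order.TTheory GRing.Theory Num.Theory.
Local Open Scope classical_set_scope.
Local Open Scope ring_scope.

(* alpha t s for t : R, s : nat; only t in [0,1] and s >= 1 are relevant. *)

Definition ker_val {R : realType} (k s : nat) (t : R) : R :=
  \sum_(s <= l < k.+1) ('C(l.-1, s.-1))%:R * t ^+ s * (1 - t) ^+ (l - s).

Definition clp_budget {R : realType} (p : R) (alpha : R -> nat -> R) : Prop :=
  forall t : R, 0 <= t <= 1 -> forall s : nat, (1 <= s)%N ->
    ((t * alpha t s)%:E <=
      1%:E - p%:E * (\int[@lebesgue_measure R]_(tau in `[0%R, t]%classic)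
                      (\sum_(1 <= sigma <oo) (alpha tau sigma)%:E)))%E.

Definition clp_ratio {R : realType} (p : R) (alpha : R -> nat -> R)
    (gamma : R) (k : nat) : Prop :=
  (gamma%:E <= (p / (1 - (1 - p) ^+ k))%:E *
     \int[@lebesgue_measure R]_(t in `[0%R, 1%R]%classic)
        (\sum_(1 <= s < k.+1) alpha t s * ker_val k s t)%:E)%E.

Definition clp_feasible {R : realType} (p : R) (K : set nat)
    (gamma : R) (alpha : R -> nat -> R) : Prop :=
  [/\ 0 <= gamma,
      (forall s : nat, (1 <= s)%N -> measurable_fun (`[0%R, 1%R]%classic : set R) (fun t : R => alpha t s)),
      (forall t : R, 0 <= t <= 1 -> forall s : nat, (1 <= s)%N ->
          0 <= alpha t s <= 1),
      clp_budget p alpha &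
      (forall k : nat, K k -> (1 <= k)%N -> clp_ratio p alpha gamma k)].

Definition clp_value {R : realType} (p : R) (K : set nat) : \bar R :=
  ereal_sup [set gamma%:E | gamma in
               [set g : R | exists alpha, clp_feasible p K g alpha]].

Definition gamma_star_q {R : realType} (p : R) (q : nat) : \bar R :=
  clp_value p [set k : nat | (1 <= k <= q)%N].

Definition gamma_star {R : realType} (p : R) : \bar R :=
  clp_value p [set k : nat | (1 <= k)%N].

(* Main.v *)
Require Import Defs.
From HB Require Import structures.
From mathcomp Require Import all_boot all_order all_algebra.
From mathcomp Require Import all_classical all_reals all_analysis.
From mathcomp Require Import measurable_realfun.
Import Order.TTheory GRing.Theory Num.Theory.
Local Open Scope ring_scope.

Section helpers.
Variable R : realType.

Lemma ker_val_ge0 k s (t : R) : 0 <= t <= 1 -> 0 <= ker_val k s t.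
Proof.
move=> /andP[t0 t1]; rewrite /ker_val; apply: sumr_ge0 => l _.
by rewrite !mulr_ge0 // exprn_ge0 // subr_ge0.
Qed.

Lemma ker_val_mono q k s (t : R) : (s <= q.+1)%N -> (q <= k)%N ->
  0 <= t <= 1 -> ker_val q s t <= ker_val k s t.
Proof.
move=> sq qk /andP[t0 t1]; rewrite /ker_val [X in _ <= X](@big_cat_nat R 0 +%R q.+1 s k.+1) //=.

rewrite lerDl; apply: sumr_ge0 => l _.
by rewrite !mulr_ge0 // exprn_ge0 // subr_ge0.
Qed.

Definition integrand (alpha : R -> nat -> R) k (t : R) : R :=
  \sum_(1 <= s < k.+1) alpha t s * ker_val k s t.

Lemma integrand_mono alpha q k t : (q <= k)%N -> 0 <= t <= 1 ->
  (forall s, (1 <= s)%N -> 0 <= alpha t s) ->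
  integrand alpha q t <= integrand alpha k t.
Proof.
move=> qk t01 a0; rewrite /integrand.
have q1 : (1 <= q.+1)%N by [].
rewrite [X in _ <= X](@big_cat_nat R 0 +%R q.+1 1 k.+1) //=.

apply: ler_wpDr.
  rewrite big_nat_cond; apply: sumr_ge0 => s /andP[/andP[s1 _] _].
  rewrite mulr_ge0 //; last exact: ker_val_ge0.
  by apply: a0; apply: leq_trans s1.
rewrite big_nat_cond [X in _ <= X]big_nat_cond; apply: ler_sum => s /andP[/andP[s1 sq] _].
apply: ler_wpM2l; first exact: a0.
by apply: ker_val_mono => //; apply: ltnW.
Qed.

Lemma integrand_ge0 alpha k t : 0 <= t <= 1 ->
  (forall s, (1 <= s)%N -> 0 <= alpha t s) -> 0 <= integrand alpha k t.
Proof.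
move=> t01 a0; rewrite /integrand big_nat_cond; apply: sumr_ge0 => s /andP[/andP[s1 _] _].
rewrite mulr_ge0 //; first exact: a0.
exact: ker_val_ge0.
Qed.

Lemma ker_val_meas k s (D : set R) : measurable_fun D (ker_val k s).
Proof.
rewrite /ker_val; apply: measurable_sum => l.
apply: measurable_funM; first apply: measurable_funM.
- exact: measurable_cst.
- exact: exprn_measurable.
apply: measurable_funX; apply: measurable_funB; first exact: measurable_cst.
exact: measurable_id.
Qed.

Lemma integrand_meas alpha k :
  (forall s : nat, (1 <= s)%N -> measurable_fun (`[0%R, 1%R]%classic : set R) (fun t : R => alpha t s)) ->
  measurable_fun (`[0%R, 1%R]%classic : set R) (fun t => (integrand alpha k t)%:E).
Proof.
move=> ma; apply/measurable_EFinP.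
have -> : integrand alpha k = fun t => \sum_(s <- index_iota 1 k.+1)
    ((if (1 <= s)%N then alpha t s else 0) * ker_val k s t).
  apply/funext => t; rewrite /integrand big_nat_cond [RHS]big_nat_cond.
  by apply: eq_bigr => s /andP[/andP[-> _] _].
apply: measurable_sum => s; apply: measurable_funM; last exact: ker_val_meas.
case: (1 <= s)%N / boolP; [exact: ma | move=> _; exact: measurable_cst].
Qed.

End helpers.
Arguments integrand {R}.

Theorem mainTheorem14 (R : realType) (p : R) (q : nat) :
  0 < p <= 1 -> (1 <= q)%N ->
  (((1 - (1 - p) ^+ q)%:E * gamma_star_q p q) <= gamma_star p)%E.
Proof.
move=> /andP[p0 p1] q1.
have b0 : 0 <= 1 - p by rewrite subr_ge0.
have b1 : 1 - p < 1 by rewrite ltrBlDr ltrDl.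
have c_pos k : (1 <= k)%N -> 0 < 1 - (1 - p) ^+ k.
  by move=> k1; rewrite subr_gt0 exprn_ilt1 // -lt0n.
have c_le1 k : 1 - (1 - p) ^+ k <= 1 by rewrite lerBlDr lerDl exprn_ge0.
set c := 1 - (1 - p) ^+ q.
have c0 : 0 < c := c_pos q q1.
rewrite /gamma_star_q /gamma_star /clp_value -ereal_sup_pZl //.
apply: ereal_sup_le => _ [_ [g [alpha [g0 ma a01 bud rat]] <-] <-].
exists (c * g); last by rewrite EFinM.
exists alpha; split => //.
- by rewrite mulr_ge0 // ltW.
move=> k _ k1.
have a0 t : 0 <= t <= 1 -> forall s, (1 <= s)%N -> 0 <= alpha t s.
  by move=> t01 s s1; case/andP: (a01 t t01 s s1).
have I0 m : (0 <= \int[@lebesgue_measure R]_(t in `[0%R, 1%R]%classic)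
        (integrand alpha m t)%:E)%E.
  apply: integral_ge0 => t /=; rewrite in_itv /= => t01; rewrite lee_fin.
  exact: (@integrand_ge0 R alpha m t t01 (a0 t t01)).
rewrite /clp_ratio.
case: (leqP k q) => kq.
  apply: (le_trans _ (rat k (introT andP (conj k1 kq)) k1)) => /=.
  rewrite lee_fin; apply: ler_piMl => //; exact: c_le1.
have Hq : (g%:E <= (p / c)%:E * \int[@lebesgue_measure R]_(t in `[0%R, 1%R]%classic)
        (integrand alpha q t)%:E)%E := rat q (introT andP (conj q1 (leqnn q))) q1.
change ((c*g)%:E <= (p / (1 - (1 - p) ^+ k))%:E * \int[@lebesgue_measure R]_(t in `[0%R, 1%R]%classic) (integrand alpha k t)%:E)%E.
apply: (@le_trans _ _ ((p%:E * \int[@lebesgue_measure R]_(t in `[0%R, 1%R]%classic)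
        (integrand alpha q t)%:E))%E).
  rewrite EFinM.
  apply: (le_trans (lee_wpmul2l _ Hq)); first by rewrite lee_fin ltW.
  rewrite muleA -EFinM mulrA mulrC mulrA mulVf ?mul1r //.
  exact: lt0r_neq0.
apply: (@le_trans _ _ ((p%:E * \int[@lebesgue_measure R]_(t in `[0%R, 1%R]%classic)
        (integrand alpha k t)%:E))%E).
  apply: lee_wpmul2l; first by rewrite lee_fin ltW.
  apply: ge0_le_integral => //.
  - move=> t /=; rewrite in_itv /= => t01; rewrite lee_fin.
    exact: (@integrand_ge0 R alpha q t t01 (a0 t t01)).
  - exact: (@integrand_meas R alpha q ma).
  - exact: (@integrand_meas R alpha k ma).
  - move=> t /=; rewrite in_itv /= => t01; rewrite lee_fin.
    exact: (@integrand_mono R alpha q k t (ltnW kq) t01 (a0 t t01)).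
apply: lee_wpmul2r; first exact: I0.
rewrite lee_fin ler_pdivlMr ?c_pos // ler_piMr //; exact: ltW.
Qed.
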